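(* Let $R$ be a Krull domain. (1) If the divisor class group $\operatorname{Cl}(R)$ is torsion, then $R$ is globally perinormal. (2) If $\dim R = 1$ and $R$ is globally perinormal, then $\operatorname{Cl}(R)$ is torsion.
   Context: All rings are commutative with identity; an overring of a domain $R$ is a ring between $R$ and its fraction field. A ring extension $A \subseteq B$ satisfies going-down if whenever $\mathfrak{p} \subset \mathfrak{q}$ are primes of $A$ and $Q$ is a prime of $B$ with $Q \cap A = \mathfrak{q}$, there is a prime $P \subseteq Q$ of $B$ with $P \cap A = \mathfrak{p}$. A domain $R$ is globally perinormal if every overring $S$ of $R$ such that $R \subseteq S$ satisfies going-down is a localization $R_W$ of $R$ at some multiplicative set $W$. A Krull domain is a domain $R$ with $R = \bigcap R_{\mathfrak{p}}$ over height one primes $\mathfrak{p}$, each nonzero element lying in only finitely many height one primes, and each $R_{\mathfrak{p}}$ ($\mathfrak{p}$ height one) a DVR; $\operatorname{Cl}(R)$ is its divisor class group. *)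

(* Defs.v *)
(* All rings are realized inside a fixed field K:
   a domain R is a predicate on K closed under the ring operations, whose
   fraction field is K; overrings of R are subrings S of K containing R;
   primes of a subring are predicates on K. *)
From mathcomp Require Import all_boot all_order all_algebra.
From Stdlib Require List.
Set Implicit Arguments. Unset Strict Implicit. Unset Printing Implicit Defensive.
Import Order.TTheory GRing.Theory Num.Theory.
Local Open Scope ring_scope.

Section Defs.
Variable K : fieldType.

Definition subset_pred (A B : K -> Prop) := forall x, A x -> B x.
Definition eq_pred (A B : K -> Prop) := forall x, A x <-> B x.

Definition is_subring (S : K -> Prop) :=
  [/\ S 1, (forall x y, S x -> S y -> S (x - y)) &
      (forall x y, S x -> S y -> S (x * y))].

Definition is_fraction_field_of (R : K -> Prop) :=
  forall x : K, exists a b, [/\ R a, R b, b != 0 & x = a / b].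

Definition is_prime (S P : K -> Prop) :=
  [/\ subset_pred P S, P 0,
      (forall x y, P x -> P y -> P (x + y)),
      (forall r x, S r -> P x -> P (r * x)) &
      (~ P 1 /\ (forall x y, S x -> S y -> P (x * y) -> P x \/ P y))].

Definition contraction (R Q : K -> Prop) : K -> Prop := fun x => Q x /\ R x.

Definition is_mult_set (R W : K -> Prop) :=
  [/\ subset_pred W R, W 1, (forall x y, W x -> W y -> W (x * y)) & ~ W 0].

Definition localization (R W : K -> Prop) : K -> Prop :=
  fun x => exists a w, [/\ R a, W w & x = a / w].

Definition loc_at (R P : K -> Prop) : K -> Prop :=
  localization R (fun w => R w /\ ~ P w).

Definition going_down (R S : K -> Prop) :=
  forall p q Q : K -> Prop, is_prime R p -> is_prime R q -> subset_pred p q ->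
    is_prime S Q -> eq_pred (contraction R Q) q ->
    exists P, [/\ is_prime S P, subset_pred P Q & eq_pred (contraction R P) p].

Definition globally_perinormal (R : K -> Prop) :=
  forall S : K -> Prop, is_subring S -> subset_pred R S -> going_down R S ->
    exists W, is_mult_set R W /\ eq_pred S (localization R W).

Definition strict_sub (A B : K -> Prop) := subset_pred A B /\ exists x, B x /\ ~ A x.

Definition zero_pred : K -> Prop := fun x => x = 0.

Definition height_one (R P : K -> Prop) :=
  [/\ is_prime R P, strict_sub zero_pred P &
      ~ exists Q, [/\ is_prime R Q, strict_sub zero_pred Q & strict_sub Q P]].

Definition krull_dim_one (R : K -> Prop) :=
  (exists P0 P1, [/\ is_prime R P0, is_prime R P1 & strict_sub P0 P1]) /\
  ~ (exists P0 P1 P2, [/\ is_prime R P0, is_prime R P1, is_prime R P2,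
                          strict_sub P0 P1 & strict_sub P1 P2]).

Definition discrete_valuation (v : K -> int) :=
  [/\ (forall x y, x != 0 -> y != 0 -> v (x * y) = v x + v y),
      (forall x y, x != 0 -> y != 0 -> x + y != 0 ->
                   Num.min (v x) (v y) <= v (x + y)) &
      (forall n : int, exists x, x != 0 /\ v x = n)].

Definition valuation_ring (v : K -> int) : K -> Prop :=
  fun x => x = 0 \/ 0 <= v x.

Definition is_DVR (V : K -> Prop) :=
  exists v, discrete_valuation v /\ eq_pred V (valuation_ring v).

Definition krull_domain (R : K -> Prop) :=
  [/\ (forall x, R x <-> (forall P, height_one R P -> loc_at R P x)),
      (forall x, R x -> x != 0 ->
         exists s : list (K -> Prop),
           forall P, height_one R P -> P x -> List.In P s) &
      (forall P, height_one R P -> is_DVR (loc_at R P))].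

Definition is_divisor (R : K -> Prop) (D : (K -> Prop) -> int) :=
  (forall P, ~ height_one R P -> D P = 0) /\
  exists s : list (K -> Prop), forall P, D P != 0 -> List.In P s.

(* D is principal: D = div(x) for some x in K^*, where the P-coefficient of
   div(x) is v_P(x), v_P the (unique) discrete valuation of the DVR R_P *)
Definition is_principal_divisor (R : K -> Prop) (D : (K -> Prop) -> int) :=
  exists x : K, x != 0 /\
    forall P, height_one R P -> forall v, discrete_valuation v ->
      eq_pred (loc_at R P) (valuation_ring v) -> v x = D P.

Definition class_group_torsion (R : K -> Prop) :=
  forall D, is_divisor R D ->
    exists n : nat, (0 < n)%N /\ is_principal_divisor R (fun P => D P *+ n).

End Defs.

(* Main.v *)
Require Import Defs.
From mathcomp Require Import all_boot all_order all_algebra.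
From mathcomp Require Import ring zify.
From mathcomp Require Import boolp.
From mathcomp Require classical_sets.
Set Implicit Arguments. Unset Strict Implicit. Unset Printing Implicit Defensive.
Import Order.TTheory GRing.Theory Num.Theory.
Local Open Scope ring_scope.

Section Basic.
Variable K : fieldType.
Implicit Types (S R P Q : K -> Prop) (x y z a b : K).

Lemma eqpredE (A B : K -> Prop) : eq_pred A B -> A = B.
Proof. by move=> h; apply: funext => x; apply: propext. Qed.

Lemma sr0 S : is_subring S -> S 0.
Proof. by case=> h1 hB _; rewrite -(subrr 1); apply: hB. Qed.
Lemma srN S x : is_subring S -> S x -> S (- x).
Proof. move=> hS hx; rewrite -sub0r; case: (hS) => _ hB _; apply: hB => //; exact: sr0. Qed.
Lemma srD S x y : is_subring S -> S x -> S y -> S (x + y).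
Proof. move=> hS hx hy; rewrite -[y]opprK; case: (hS) => _ hB _; apply: hB => //; exact: srN. Qed.
Lemma srM S x y : is_subring S -> S x -> S y -> S (x * y).
Proof. by case=> _ _ hM; apply: hM. Qed.
Lemma sr1 S : is_subring S -> S 1.
Proof. by case. Qed.
Lemma srX S x n : is_subring S -> S x -> S (x ^+ n).
Proof. move=> hS hx; elim: n => [|n IH]; first by rewrite expr0; exact: sr1.
by rewrite exprS; apply: srM. Qed.

Lemma prime_sub S P x : is_prime S P -> P x -> S x.
Proof. by case=> h _ _ _ _; apply: h. Qed.
Lemma prime0 S P : is_prime S P -> P 0.
Proof. by case. Qed.
Lemma prime_not1 S P : is_prime S P -> ~ P 1.
Proof. by case=> _ _ _ _ []. Qed.
Lemma prime_mul S P r x : is_prime S P -> S r -> P x -> P (r * x).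
Proof. by case=> _ _ _ h _; apply: h. Qed.
Lemma prime_prime S P x y : is_prime S P -> S x -> S y -> P (x * y) -> P x \/ P y.
Proof. by case=> _ _ _ _ [_ h]; apply: h. Qed.
Lemma prime_pow S P x n : is_subring S -> is_prime S P -> S x -> P (x ^+ n) -> P x.
Proof.
move=> hS hP hx; elim: n => [|n IH]; first by rewrite expr0 => /(prime_not1 hP).
rewrite exprS => /(prime_prime hP hx (srX n hS hx)) [] //; exact: IH.
Qed.
Lemma prime_neq0 S P x : is_prime S P -> ~ P x -> x != 0.
Proof. by move=> hP hx; apply/eqP => e; apply: hx; rewrite e; exact: prime0 hP. Qed.

Lemma zero_prime S : is_subring S -> is_prime S (@zero_pred K).
Proof.
move=> hS; split.
- by move=> x ->; exact: sr0.
- by [].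
- by move=> x y -> ->; rewrite addr0.
- by move=> r x _ ->; rewrite mulr0.
- split; first by move=> /eqP; rewrite oner_eq0.
  by move=> x y _ _ /eqP; rewrite mulf_eq0 => /orP[] /eqP; [left|right].
Qed.

Lemma contraction_prime R S M : is_subring R -> subset_pred R S -> is_prime S M ->
  is_prime R (contraction R M).
Proof.
move=> hR hRS hM; split.
- by move=> x [].
- by split; [exact: prime0 hM| exact: sr0].
- move=> x y [hx rx] [hy ry]; split; last exact: srD.
  by case: hM => _ _ h _ _; apply: h.
- move=> r x hr [hx rx]; split; last exact: srM.
  by apply: prime_mul hM _ hx; apply: hRS.
- split; first by move=> [h _]; exact: prime_not1 hM h.
  move=> x y hx hy [hxy _].
  by case: (prime_prime hM (hRS _ hx) (hRS _ hy) hxy) => h; [left|right].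
Qed.

Lemma loc_R R P x : is_subring R -> is_prime R P -> R x -> loc_at R P x.
Proof.
move=> hR hP hx; exists x, 1; split => //; first by split; [exact: sr1 | exact: prime_not1 hP].
by rewrite divr1.
Qed.

Lemma loc_inv R P u : is_subring R -> is_prime R P -> R u -> ~ P u -> loc_at R P u^-1.
Proof.
move=> hR hP hu hnu; exists 1, u; split => //; first exact: sr1.
by rewrite div1r.
Qed.

Lemma loc_sub R P : is_subring R -> is_prime R P -> is_subring (loc_at R P).
Proof.
move=> hR hP; split.
- exact: loc_R (sr1 hR).
- move=> x y [a [u [ha [hu hnu] ->]]] [b [w [hb [hw hnw] ->]]].
  have u0 := prime_neq0 hP hnu; have w0 := prime_neq0 hP hnw.
  exists (a * w - b * u), (u * w); split.
  + by case: hR => _ hB hM; apply: hB; apply: hM.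
  + split; first exact: srM.
    by move=> /(prime_prime hP hu hw) [].
  + by field; rewrite u0 w0.
- move=> x y [a [u [ha [hu hnu] ->]]] [b [w [hb [hw hnw] ->]]].
  have u0 := prime_neq0 hP hnu; have w0 := prime_neq0 hP hnw.
  exists (a * b), (u * w); split.
  + exact: srM.
  + split; first exact: srM.
    by move=> /(prime_prime hP hu hw) [].
  + by field; rewrite u0 w0.
Qed.


Section Val.
Variable v : K -> int.
Hypothesis hv : discrete_valuation v.

Lemma vM x y : x != 0 -> y != 0 -> v (x * y) = v x + v y.
Proof. by case: hv => h _ _; apply: h. Qed.

Lemma v1 : v 1 = 0.
Proof.
have := vM (oner_neq0 K) (oner_neq0 K); rewrite mulr1 => e.
by apply: (addrI (v 1)); rewrite addr0 -e.
Qed.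

Lemma vV x : x != 0 -> v x^-1 = - v x.
Proof.
move=> x0; have := vM x0 (invr_neq0 x0); rewrite divff // v1 => e.
by apply/eqP; rewrite -addr_eq0 addrC -e.
Qed.

Lemma vX x n : x != 0 -> v (x ^+ n) = v x *+ n.
Proof.
move=> x0; elim: n => [|n IH]; first by rewrite expr0 v1.
by rewrite exprS vM ?expf_neq0 // IH mulrS.
Qed.

Lemma vXz x (z : int) : x != 0 -> v (x ^ z) = z * v x.
Proof.
move=> x0; case: z => k.
  rewrite /= vX //; lia.
rewrite NegzE -exprnN vV ?expf_neq0 // vX //.
lia.
Qed.

Lemma vring_iff x : x != 0 -> valuation_ring v x <-> 0 <= v x.
Proof. by move=> x0; split; [case=> // e; move: x0; rewrite e eqxx | right]. Qed.

Lemma vsurj (n : int) : exists x, x != 0 /\ v x = n.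
Proof. by case: hv => _ _ h; apply: h. Qed.

End Val.

Lemma val_unique v w : discrete_valuation v -> discrete_valuation w ->
  (forall x, valuation_ring v x <-> valuation_ring w x) ->
  forall x, x != 0 -> v x = w x.
Proof.
move=> hv hw hvw.
have unit y : y != 0 -> v y = 0 -> w y = 0.
  move=> y0 vy.
  have h1 : valuation_ring w y by apply: (proj1 (hvw _)); apply: (proj2 (vring_iff v y0)); rewrite vy.
  have h2 : valuation_ring w y^-1.
    by apply: (proj1 (hvw _)); apply: (proj2 (vring_iff v (invr_neq0 y0))); rewrite vV // vy oppr0.
  move/(vring_iff w y0): h1; move/(vring_iff w (invr_neq0 y0)): h2.
  by rewrite vV // oppr_ge0 => h2 h1; apply/eqP; rewrite eq_le h1 h2.
have [p [p0 vp]] := vsurj hv 1.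
have key y : y != 0 -> w y = v y * w p.
  move=> y0.
  have [[k ek] | [k ek]] : (exists k : nat, v y = k%:Z) \/ (exists k : nat, v y = - k%:Z).
    - case: (v y) => k; first by left; exists k.
      by right; exists k.+1; rewrite NegzE.
  - have pk0 : p ^+ k != 0 by rewrite expf_neq0.
    have u0 : y / p ^+ k != 0 by rewrite mulf_neq0 ?invr_neq0.
    have := unit _ u0; rewrite (vM hv) ?invr_neq0 // (vV hv) // (vX hv) // vp ek.
    rewrite (vM hw) ?invr_neq0 // (vV hw) // (vX hw) // => h.
    have {}h := h ltac:(lia). lia.
  - have pk0 : p ^+ k != 0 by rewrite expf_neq0.
    have u0 : y * p ^+ k != 0 by rewrite mulf_neq0.
    have := unit _ u0; rewrite (vM hv) // (vX hv) // vp ek.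
    rewrite (vM hw) // (vX hw) // => h.
    have {}h := h ltac:(lia). lia.
have wp0 : 0 <= w p.
  have : valuation_ring w p by apply: (proj1 (hvw _)); apply: (proj2 (vring_iff v p0)); rewrite vp.
  by move/(vring_iff w p0).
have [q [q0 wq]] := vsurj hw 1.
have : v q * w p = 1 by rewrite -key.

move=> e.
have wp1 : w p = 1.
  move: e wp0; move: (v q) (w p) => a b h hb.
  have [ha|ha] : a <= 0 \/ 1 <= a by lia.
  - by nia.
  - by nia.
move=> x x0; by rewrite key // wp1 mulr1.
Qed.

Section Krull.
Variable R : K -> Prop.
Hypothesis hR : is_subring R.
Hypothesis hK : krull_domain R.

Lemma h1_prime P : height_one R P -> is_prime R P.
Proof. by case. Qed.

Lemma dvr_ex P : height_one R P ->
  exists v, discrete_valuation v /\ eq_pred (loc_at R P) (valuation_ring v).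
Proof. by case: hK => _ _ h /h [v hv]; exists v. Qed.

Lemma krull_R x : (forall P, height_one R P -> loc_at R P x) -> R x.
Proof. by case: hK => h _ _; move/h. Qed.

Lemma krull_fin x : R x -> x != 0 ->
  exists s : list (K -> Prop), forall P, height_one R P -> P x -> List.In P s.
Proof. by case: hK => _ h _; apply: h. Qed.

Section AtP.
Variables (P : K -> Prop) (v : K -> int).
Hypotheses (hP : height_one R P) (hv : discrete_valuation v)
  (hPv : eq_pred (loc_at R P) (valuation_ring v)).

Lemma locv x : x != 0 -> loc_at R P x <-> 0 <= v x.
Proof. by move=> x0; rewrite -(vring_iff v x0); apply: hPv. Qed.

Lemma vR x : R x -> x != 0 -> 0 <= v x.
Proof. by move=> hx x0; apply/(locv x0)/loc_R => //; exact: h1_prime. Qed.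

Lemma v_unit u : R u -> ~ P u -> v u = 0.
Proof.
move=> hu hnu; have u0 := prime_neq0 (h1_prime hP) hnu.
have h1 := vR hu u0.
have : loc_at R P u^-1 by apply: loc_inv => //; exact: h1_prime.
move/(locv (invr_neq0 u0)); rewrite (vV hv) // oppr_ge0 => h2.
by apply/eqP; rewrite eq_le h1 h2.
Qed.

Lemma v_pos y : P y -> y != 0 -> 0 < v y.
Proof.
move=> hy y0; have hP' := h1_prime hP.
have ry := prime_sub hP' hy.
rewrite lt_def (vR ry y0) andbT; apply/eqP => vy0.
have : loc_at R P y^-1 by apply/(locv (invr_neq0 y0)); rewrite (vV hv) // vy0 oppr0.
move=> [a [u [ha [hu hnu] e]]]; have u0 := prime_neq0 hP' hnu; apply: hnu.
have -> : u = a * y.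
  have -> : u = y^-1 * u * y by field.
  by rewrite e; field.
exact: prime_mul hP' ha hy.
Qed.

Lemma loc_dich x : x != 0 -> loc_at R P x \/ loc_at R P x^-1.
Proof.
move=> x0; case: (lerP 0 (v x)) => h; first by left; apply/(locv x0).
by right; apply/(locv (invr_neq0 x0)); rewrite (vV hv) // oppr_ge0 ltW.
Qed.

End AtP.

Lemma pow_clear P y z : height_one R P -> R y -> y != 0 ->
  (forall v, discrete_valuation v -> eq_pred (loc_at R P) (valuation_ring v) -> 0 < v y) ->
  z != 0 -> exists k : nat, loc_at R P (z * y ^+ k).
Proof.
move=> hP hy y0 hpos z0; have [v [hv hPv]] := dvr_ex hP.
have vy := hpos v hv hPv.
exists `|v z|%N; apply/(locv hPv); first by rewrite mulf_neq0 ?expf_neq0.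
rewrite (vM hv) ?expf_neq0 // (vX hv) //.
have hk : 0 <= v z + (`|v z|%N)%:Z by lia.
move: hk vy; move: (v z) (v y) `|v z|%N => a b k; nia.
Qed.

End Krull.

Definition is_ideal (S I : K -> Prop) :=
  [/\ subset_pred I S, I 0, (forall x y, I x -> I y -> I (x + y)) &
      (forall r x, S r -> I x -> I (r * x))].

Lemma exists_prime S t : is_subring S -> S t -> ~ (exists z, S z /\ t * z = 1) ->
  exists M, is_prime S M /\ M t.
Proof.
move=> hS ht hnu.
pose PP (X : K -> Prop) := X = (fun _ => False) \/ [/\ is_ideal S X, X t & ~ X 1].
have chain : forall F : (K -> Prop) -> Prop,
    classical_sets.subset F PP -> classical_sets.total_on F classical_sets.subset ->
    PP (classical_sets.bigcup F id).
  move=> F FP Ftot.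
  case: (pselect (exists X, F X /\ X t)) => [[X0 [FX0 X0t]]|nX].
  - have X0i : is_ideal S X0.
      by case: (FP _ FX0) => [e | [] //]; move: X0t; rewrite e.
    have memI X x : F X -> X x -> [/\ is_ideal S X, X t & ~ X 1].
      move=> FX Xx; case: (FP _ FX) => // e; by move: Xx; rewrite e.
    right; split.
    + split.
      * by move=> x [X FX Xx]; case: (memI _ _ FX Xx) => [[h _ _ _] _ _]; apply: h.
      * by exists X0 => //; case: X0i.
      * move=> x y [X FX Xx] [Y FY Yy].
        case: (memI _ _ FX Xx) => [[_ _ hXD _] _ _].
        case: (memI _ _ FY Yy) => [[_ _ hYD _] _ _].
        case: (Ftot _ _ FX FY) => hXY.
        - by exists Y => //; apply: hYD => //; apply: hXY.
        - by exists X => //; apply: hXD => //; apply: hXY.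
      * move=> r x hr [X FX Xx]; exists X => //.
        by case: (memI _ _ FX Xx) => [[_ _ _ h] _ _]; apply: h.
    + by exists X0.
    + by move=> [X FX X1]; case: (memI _ _ FX X1).
  - left; apply: funext => x; apply: propext; split => // [[X FX Xx]].
    case: (FP _ FX) => [e | [_ Xt _]]; first by move: Xx; rewrite e.
    by apply: nX; exists X.
have [A [PA Amax]] := classical_sets.Zorn_bigcup chain.
pose tS := fun x => exists s, S s /\ x = t * s.
have tSi : is_ideal S tS.
  split.
  - by move=> x [s [hs ->]]; apply: srM.
  - by exists 0; split; [exact: sr0 | rewrite mulr0].
  - by move=> x y [s [hs ->]] [s' [hs' ->]]; exists (s + s'); split; [exact: srD | rewrite mulrDr].
  - by move=> r x hr [s [hs ->]]; exists (r * s); split; [exact: srM | rewrite mulrCA].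
have [Ai At An1] : [/\ is_ideal S A, A t & ~ A 1].
  case: PA => // eA; exfalso; apply: (Amax tS).
  - rewrite eA; split => // hsub; apply: (hsub t); exists 1; split; [exact: sr1|by rewrite mulr1].
  - right; split => //; first by exists 1; split; [exact: sr1|by rewrite mulr1].
    by move=> [s [hs e]]; apply: hnu; exists s; split.
case: (Ai) => AS A0 AD AM.
have ext x : S x -> ~ A x -> exists a s, [/\ A a, S s & 1 = a + x * s].
  move=> hx hAx.
  pose B := fun z => exists a s, [/\ A a, S s & z = a + x * s].
  have Bi : is_ideal S B.
    split.
    - move=> z [a [s [ha hs ->]]]; apply: srD => //; [exact: (AS) | exact: srM].
    - by exists 0, 0; split => //; [exact: sr0 | rewrite mulr0 addr0].
    - move=> y z [a [s [ha hs ->]]] [a' [s' [ha' hs' ->]]].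
      exists (a + a'), (s + s'); split; [exact: AD | exact: srD | by rewrite mulrDr addrACA].
    - move=> r z hr [a [s [ha hs ->]]]; exists (r * a), (r * s); split.
      + exact: AM. + exact: srM. + by rewrite mulrDr mulrCA.
  have AB : classical_sets.proper A B.
    split.
    - by move=> a ha; exists a, 0; split => //; [exact: sr0 | rewrite mulr0 addr0].
    - move=> hBA; apply: hAx; apply: hBA; exists 0, 1; split => //; first exact: sr1.
      by rewrite add0r mulr1.
  case: (pselect (B 1)) => // hB1.
  exfalso; apply: (Amax B AB); right; split => //.
  by exists t, 0; split => //; [exact: sr0 | rewrite mulr0 addr0].
exists A; split => //; split => //.
split => // x y hx hy hxy.
case: (pselect (A x)) => hAx; first by left.
case: (pselect (A y)) => hAy; first by right.
exfalso; apply: An1.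
have [a [s [ha hs e1]]] := ext x hx hAx.
have [a' [s' [ha' hs' e2]]] := ext y hy hAy.
have -> : 1 = a * a' + (a * (y * s') + (s * (x * a')) + (s * s') * (x * y)).
  by rewrite -[1]mulr1 {1}e1 e2; ring.
apply: (AD); first by apply: (AM) => //; exact: (AS).
apply: (AD); first (apply: (AD)).
- by rewrite mulrC; apply: (AM) => //; exact: srM.
- by rewrite mulrA; apply: (AM) => //; exact: srM.
- by apply: (AM) => //; exact: srM.
Qed.


Section Part1.
Variable R : K -> Prop.
Hypothesis hR : is_subring R.
Hypothesis hF : is_fraction_field_of R.
Hypothesis hK : krull_domain R.
Hypothesis hct : class_group_torsion R.

Lemma tQ_ex Q : height_one R Q -> exists t (n : nat),
  [/\ R t, t != 0, (0 < n)%N,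
   (forall v, discrete_valuation v -> eq_pred (loc_at R Q) (valuation_ring v) -> v t = n%:Z) &
   (forall P, height_one R P -> P <> Q -> forall v, discrete_valuation v ->
      eq_pred (loc_at R P) (valuation_ring v) -> v t = 0)].
Proof.
move=> hQ.
pose D := fun P : K -> Prop => if pselect (P = Q) then (1 : int) else 0.
have hD : is_divisor R D.
  split.
  - by move=> P hP; rewrite /D; case: pselect => // e; case: hP; rewrite e.
  - exists [:: Q] => P; rewrite /D; case: pselect => // e _; by left.
have [n [n0 [x [x0 hx]]]] := hct hD.
have DP P : D P *+ n = if pselect (P = Q) then n%:Z else 0.
  by rewrite /D; case: pselect => e /=; rewrite ?natz ?mul0rn.
exists x, n; split => //.
- apply: (krull_R hK) => P hP.
  have [v [hv hPv]] := dvr_ex hK hP.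
  apply/(locv hPv x0); rewrite (hx P hP v hv hPv) DP.
  by case: pselect.
- by move=> v hv hQv; rewrite (hx Q hQ v hv hQv) DP; case: pselect.
- by move=> P hP nPQ v hv hPv; rewrite (hx P hP v hv hPv) DP; case: pselect.
Qed.

Lemma pow_div Q t n y : height_one R Q -> R t -> t != 0 -> (0 < n)%N ->
  (forall v, discrete_valuation v -> eq_pred (loc_at R Q) (valuation_ring v) -> v t = n%:Z) ->
  (forall P, height_one R P -> P <> Q -> forall v, discrete_valuation v ->
      eq_pred (loc_at R P) (valuation_ring v) -> v t = 0) ->
  Q y -> R (y ^+ n / t).
Proof.
move=> hQ ht t0 n0 vtQ vtP hy.
have ry := prime_sub (h1_prime hQ) hy.
case: (eqVneq y 0) => [->|y0].
  by rewrite expr0n eqn0Ngt n0 /= mul0r; exact: sr0.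
have yn0 : y ^+ n / t != 0 by rewrite mulf_neq0 ?invr_neq0 ?expf_neq0.
apply: (krull_R hK) => P hP.
have [v [hv hPv]] := dvr_ex hK hP.
apply/(locv hPv yn0).
rewrite (vM hv) ?invr_neq0 ?expf_neq0 // (vV hv) // (vX hv) //.
case: (pselect (P = Q)) => [e|ne].
- subst P; rewrite (vtQ v hv hPv).
  have := v_pos hR hQ hv hPv hy y0.
  move: (v y) => a ha; rewrite -mulr_natr. nia.
- rewrite (vtP P hP ne v hv hPv) oppr0 addr0.
  by rewrite mulrn_wge0 // (vR hR hP hPv ry y0).
Qed.

Lemma main1 S Q t n : is_subring S -> subset_pred R S -> going_down R S ->
  height_one R Q -> R t -> t != 0 -> (0 < n)%N ->
  (forall v, discrete_valuation v -> eq_pred (loc_at R Q) (valuation_ring v) -> v t = n%:Z) ->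
  (forall P, height_one R P -> P <> Q -> forall v, discrete_valuation v ->
      eq_pred (loc_at R P) (valuation_ring v) -> v t = 0) ->
  ~ (exists z, S z /\ t * z = 1) ->
  forall s, S s -> loc_at R Q s.
Proof.
move=> hS hRS hGD hQ ht t0 n0 vtQ vtP hnu s hs.
have hQp := h1_prime hQ.
have [M [hM Mt]] := exists_prime hS (hRS _ ht) hnu.
have hq := contraction_prime hR hRS hM.
have Qq : subset_pred Q (contraction R M).
  move=> y hy; have ry := prime_sub hQp hy; split => //.
  apply: (prime_pow (n := n) hS hM (hRS _ ry)).
  have -> : y ^+ n = (y ^+ n / t) * t by field.
  apply: (prime_mul hM) => //; apply: hRS; exact: (pow_div hQ ht t0 n0 vtQ vtP hy).
have [P' [hP' P'M eP']] := hGD Q (contraction R M) M hQp hq Qq hM (fun x => conj id id).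
case: (eqVneq s 0) => [->|s0]; first by apply: loc_R => //; exact: sr0.
have [v [hv hQv]] := dvr_ex hK hQ.
case: (loc_dich hv hQv s0) => // [[a [u [ha [hu hnu'] e]]]].
have u0 := prime_neq0 hQp hnu'.
have a0 : a != 0.
  by apply/eqP => a0; move: e; rewrite a0 mul0r => /eqP; rewrite invr_eq0 (negPf s0).
have eu : u = s * a.
  have -> : u = s * (s^-1 * u) by field.
  by rewrite e; congr (_ * _); field.
case: (pselect (Q a)) => hQa.
- exfalso; apply: hnu'; apply/eP'; split => //.
  rewrite eu; apply: (prime_mul hP') => //.
  by case: (eP' a) => _ /(_ hQa) [].
- exists u, a; split; [done | by split | by rewrite eu; field].
Qed.

Lemma part1 : globally_perinormal R.
Proof.
move=> S hS hRS hGD.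
pose W := fun w => R w /\ exists z, S z /\ w * z = 1.
have W0 w : W w -> w != 0.
  by move=> [_ [z [_ e]]]; apply/eqP => w0; move: e; rewrite w0 mul0r => /eqP; rewrite eq_sym oner_eq0.
have WM x y : W x -> W y -> W (x * y).
  move=> [rx [z [sz ez]]] [ry [z' [sz' ez']]]; split; first exact: srM.
  by exists (z * z'); split; [exact: srM | rewrite mulrACA ez ez' mulr1].
have W1 : W 1 by split; [exact: sr1 | exists 1; split; [exact: sr1 | rewrite mulr1]].
have WX x k : W x -> W (x ^+ k).
  by move=> hx; elim: k => [|k IH]; [rewrite expr0 | rewrite exprS; apply: WM].
exists W; split.
  split => //; first by move=> x [].
  by move=> /W0; rewrite eqxx.
move=> x; split; last first.
  move=> [a [w [ha [rw [z [sz ez]]] ->]]].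
  have w0 : w != 0 by apply/eqP => w0; move: ez; rewrite w0 mul0r => /eqP; rewrite eq_sym oner_eq0.
  have -> : a / w = a * z by congr (_ * _); apply: (mulfI w0); rewrite ez divff.
  by apply: srM => //; apply: hRS.
move=> hx.
case: (eqVneq x 0) => [->|x0].
  by exists 0, 1; split => //; [exact: sr0 | rewrite mul0r].
have [a [b [ha hb b0 ex]]] := hF x.
have [s hs] := krull_fin hK hb b0.
have ind : forall l : list (K -> Prop), exists w, W w /\
    forall Q, List.In Q l -> height_one R Q -> loc_at R Q (x * w).
  elim => [|Q l [w [hw IH]]]; first by exists 1; split.
  case: (pselect (height_one R Q)) => hQ; last first.
    by exists w; split => // Q' [<-|hin] hQ'; [done | exact: IH].
  have hQp := h1_prime hQ.
  have [t [n [ht t0 n0 vtQ vtP]]] := tQ_ex hQ.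
  case: (pselect (exists z, S z /\ t * z = 1)) => hu.
  - have [k hk] := pow_clear hK hQ ht t0 (fun v hv hQv => ltac:(rewrite (vtQ v hv hQv); lia)) x0.
    exists (w * t ^+ k); split; first by apply: WM => //; apply: WX; split.
    have hLQ := loc_sub hR hQp.
    move=> Q' [<-|hin] hQ'.
    + by rewrite mulrCA mulrC; apply: srM hLQ _ _ ; [ | apply: loc_R => //; case: hw].
    + rewrite mulrA; apply: srM (loc_sub hR (h1_prime hQ')) _ _; first exact: IH.
      by apply: loc_R => //; [exact: h1_prime | exact: srX].
  - have xQ := main1 hS hRS hGD hQ ht t0 n0 vtQ vtP hu hx.
    exists w; split => // Q' [<-|hin] hQ'; last exact: IH.
    by apply: srM (loc_sub hR hQp) _ _ => //; apply: loc_R => //; case: hw.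
have [w [hw IH]] := ind s.
exists (x * w), w; split => //.
- apply: (krull_R hK) => Q hQ.
  case: (pselect (Q b)) => hQb; first by apply: IH => //; apply: hs.
  have hQp := h1_prime hQ.
  rewrite ex; apply: srM (loc_sub hR hQp) _ _; first apply: srM (loc_sub hR hQp) _ _.
  + exact: loc_R.
  + exact: loc_inv.
  + by apply: loc_R => //; case: hw.
- by have w0 := W0 _ hw; field.
Qed.

End Part1.


Section Part2.
Variable R : K -> Prop.
Hypothesis hR : is_subring R.
Hypothesis hK : krull_domain R.
Hypothesis hdim : krull_dim_one R.

Lemma GD_all S : is_subring S -> subset_pred R S -> going_down R S.
Proof.
move=> hS hRS p q Q hp hq pq hQ eQ.
case: (pselect (eq_pred p q)) => epq.
  by exists Q; split => // x; split => [/eQ /epq | /epq /eQ].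
case: (pselect (exists x, p x /\ x <> 0)) => [hpx|hpx]; last first.
  exists (@zero_pred K); split.
  - exact: zero_prime.
  - by move=> x ->; exact: prime0 hQ.
  - move=> x; split.
    + by move=> [-> _]; exact: prime0 hp.
    + move=> px; split; last exact: prime_sub hp px.
      by case: (pselect (x = 0)) => // nx; exfalso; apply: hpx; exists x.
exfalso; case: hdim => _; apply.
exists (@zero_pred K), p, q; split => //.
- exact: zero_prime.
- by split; [move=> x ->; exact: prime0 hp | case: hpx => x [px nx]; exists x].
- split => //.
  case: (pselect (exists x, q x /\ ~ p x)) => // hn; exfalso; apply: epq => x.
  split; first exact: pq.
  by move=> qx; case: (pselect (p x)) => // npx; exfalso; apply: hn; exists x.
Qed.

Lemma approx P : height_one R P -> exists x,
  (forall Q, height_one R Q -> Q <> P -> loc_at R Q x) /\ ~ loc_at R P x.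
Proof.
move=> hP; have hPp := h1_prime hP.
have [_ [a [Pa na0]]] : strict_sub (@zero_pred K) P by case: hP.
have a0 : a != 0 by apply/eqP.
have ra := prime_sub hPp Pa.
have [s hs] := krull_fin hK ra a0.
have ind : forall l : list (K -> Prop), exists c, [/\ R c, ~ P c &
    forall Q, List.In Q l -> height_one R Q -> Q <> P -> loc_at R Q (c / a)].
  elim => [|Q l [c [rc nPc IH]]].
    by exists 1; split => //; [exact: sr1 | exact: prime_not1 hPp].
  case: (pselect (height_one R Q /\ Q <> P)) => hQ; last first.
    exists c; split => // Q' [<-|hin] hQ' nQ'; last exact: IH.
    by exfalso; apply: hQ.
  case: hQ => hQ nQP; have hQp := h1_prime hQ.
  have [b [Qb nPb]] : exists b, Q b /\ ~ P b.
    case: (pselect (exists b, Q b /\ ~ P b)) => // hn; exfalso.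
    have QP : subset_pred Q P.
      by move=> x Qx; case: (pselect (P x)) => // nPx; exfalso; apply: hn; exists x.
    case: hP => _ _; apply; exists Q; split => //; first by case: hQ.
    split => //.
    case: (pselect (exists x, P x /\ ~ Q x)) => // hn2; exfalso; apply: nQP.
    apply: eqpredE => x; split; first exact: QP.
    by move=> Px; case: (pselect (Q x)) => // nQx; exfalso; apply: hn2; exists x.
  have b0 := prime_neq0 hPp nPb.
  have rb := prime_sub hQp Qb.
  have [k hk] := pow_clear hK hQ rb b0 (fun v hv hQv => v_pos hR hQ hv hQv Qb b0) (invr_neq0 a0).
  exists (c * b ^+ k); split.
  - by apply: srM => //; exact: srX.
  - move=> /(prime_prime hPp rc (srX k hR rb)) [] // /(prime_pow hR hPp rb).
    exact: nPb.
  - move=> Q' [<-|hin] hQ' nQ'.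
    + rewrite -mulrA [_ / a]mulrC; apply: srM (loc_sub hR hQp) _ _ => //.
      exact: loc_R.
    + rewrite mulrAC; apply: srM (loc_sub hR (h1_prime hQ')) _ _; first exact: IH.
      by apply: loc_R; [ | exact: h1_prime | exact: srX].
have [c [rc nPc hc]] := ind s.
exists (c / a); split.
- move=> Q hQ nQ; case: (pselect (Q a)) => Qa; first by apply: hc => //; apply: hs.
  have hQp := h1_prime hQ.
  by apply: srM (loc_sub hR hQp) _ _; [exact: loc_R | exact: loc_inv].
- move=> [r [u [hr [hu nPu] e]]].
  have u0 := prime_neq0 hPp nPu.
  have ecu : c * u = r * a.
    have -> : c * u = (c / a) * a * u by field.
    by rewrite e; field.
  have : P (c * u) by rewrite ecu; exact: prime_mul hPp hr Pa.
  by case/(prime_prime hPp rc hu).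
Qed.

Hypothesis hgp : globally_perinormal R.

Lemma w_ex P : height_one R P -> exists w (m : nat),
  [/\ R w, w != 0, (0 < m)%N,
   (forall v, discrete_valuation v -> eq_pred (loc_at R P) (valuation_ring v) -> v w = m%:Z) &
   (forall Q, height_one R Q -> Q <> P -> forall v, discrete_valuation v ->
      eq_pred (loc_at R Q) (valuation_ring v) -> v w = 0)].
Proof.
move=> hP; have hPp := h1_prime hP.
pose S := fun x => forall Q, height_one R Q -> Q <> P -> loc_at R Q x.
have hS : is_subring S.
  split.
  - by move=> Q hQ _; apply: loc_R => //; [exact: h1_prime | exact: sr1].
  - move=> x y hx hy Q hQ nQ; have := loc_sub hR (h1_prime hQ); case=> _ hB _.
    by apply: hB; [apply: hx | apply: hy].
  - by move=> x y hx hy Q hQ nQ; apply: srM (loc_sub hR (h1_prime hQ)) _ _; [apply: hx | apply: hy].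
have hRS : subset_pred R S by move=> x hx Q hQ _; apply: loc_R => //; exact: h1_prime.
have [W [[WR W1 WM W0] eW]] := hgp hS hRS (GD_all hS hRS).
have [x [Sx nPx]] := approx hP.
have [a [w [ha Ww ex]]] := proj1 (eW x) Sx.
have rw := WR _ Ww.
have w0 : w != 0 by apply/eqP => e; apply: W0; rewrite -e.
have Pw : P w.
  case: (pselect (P w)) => // nPw; exfalso; apply: nPx.
  by exists a, w; split.
have Swi : S w^-1.
  by apply/eW; exists 1, w; split => //; [exact: sr1 | rewrite div1r].
have [v0 [hv0 hPv0]] := dvr_ex hK hP.
have v0p := v_pos hR hP hv0 hPv0 Pw w0.
exists w, `|v0 w|%N; split => //.
- lia.
- move=> v hv hPv.
  rewrite -(val_unique hv0 hv _ w0); first by lia.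
  by move=> y; split => [/hPv0 /hPv | /hPv /hPv0].
- move=> Q hQ nQ v hv hQv.
  have h1 := vR hR hQ hQv rw w0.
  have := Swi Q hQ nQ; move/(locv hQv (invr_neq0 w0)); rewrite (vV hv) // oppr_ge0 => h2.
  by apply/eqP; rewrite eq_le h1 h2.
Qed.

Lemma part2 : class_group_torsion R.
Proof.
move=> D [Dh [s hs]].
pose Ds l P := if pselect (List.In P l) then D P else 0.
have ind : forall l, exists n x, [/\ (0 < n)%N, x != 0 &
    forall P, height_one R P -> forall v, discrete_valuation v ->
      eq_pred (loc_at R P) (valuation_ring v) -> v x = Ds l P *+ n].
  elim => [|P0 l [n [x [n0 x0 hx]]]].
    exists 1%N, 1; split; [done | exact: oner_neq0 | move=> P hP v hv hPv]; rewrite (v1 hv) /Ds.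
    by case: pselect.
  case: (pselect (height_one R P0 /\ ~ List.In P0 l)) => hP0; last first.
    exists n, x; split => // P hP v hv hPv; rewrite (hx P hP v hv hPv).
    congr (_ *+ _); rewrite /Ds.
    case: (pselect (List.In P l)) => hin /=.
    + by case: pselect => //= hn; exfalso; apply: hn; right.
    + case: pselect => //= [[e|hin2]]; last by exfalso; apply: hin.
      by exfalso; apply: hP0; split; [rewrite e | rewrite e].
  case: hP0 => hP0 nin0.
  have [w [m [rw w0 m0 vwP vwQ]]] := w_ex hP0.
  exists (n * m)%N, (x ^+ m * w ^ (n%:Z * D P0)); split.
  - by rewrite muln_gt0 n0 m0.
  - by rewrite mulf_neq0 ?expf_neq0 ?expfz_neq0.
  move=> P hP v hv hPv.
  rewrite (vM hv) ?expf_neq0 ?expfz_neq0 // (vX hv) // (vXz hv) // (hx P hP v hv hPv).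
  case: (pselect (P = P0)) => [e|ne].
  - subst P; rewrite (vwP v hv hPv) /Ds.
    case: (pselect (List.In P0 l)) => /= h1; first by exfalso.
    case: (pselect (List.In P0 (P0 :: l))) => /= h2; last by exfalso; apply: h2; left.
    lia.
  - rewrite (vwQ P hP ne v hv hPv) /Ds.
    case: (pselect (List.In P (P0 :: l))) => /= h1.
    + case: h1 => [e|hin]; first by exfalso; apply: ne.
      case: (pselect (List.In P l)) => /= h2 //; lia.
    + case: (pselect (List.In P l)) => /= h2; first by exfalso; apply: h1; right.
      lia.
have [n [x [n0 x0 hx]]] := ind s.
exists n; split => //; exists x; split => // P hP v hv hPv.
rewrite (hx P hP v hv hPv) /Ds; case: pselect => // nin.
case: (eqVneq (D P) 0) => [->|nD] //.
by exfalso; apply: nin; apply: hs.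
Qed.

End Part2.

End Basic.

Theorem theorem6p4 (K : fieldType) (R : K -> Prop) :
  is_subring R -> is_fraction_field_of R -> krull_domain R ->
  (class_group_torsion R -> globally_perinormal R) /\
  (krull_dim_one R -> globally_perinormal R -> class_group_torsion R).
Proof.
move=> hR hF hK; split.
- by move=> hct; apply: part1.
- by move=> hdim hgp; apply: part2.
Qed.
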